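(* For $n=1,2,3,\dots$, $$[n]_{\mathbb{Z},\mathbb{N}}=\prod_{b=2}^n b^{\operatorname{ord}_b(n)},$$ where $\operatorname{ord}_b(n)$ is the largest $\alpha\in\mathbb{N}$ such that $b^\alpha\mid n$.
   Context: $\mathbb{N}=\{0,1,2,\dots\}$. For an integer $b\ge0$ and $a\in\mathbb{Z}$ define $\operatorname{ord}_b(a):=\sup\{k\in\mathbb{N}: a\mathbb{Z}\subseteq b^k\mathbb{Z}\}$ (convention $0^0=1$); thus for $b\ge2$ it is the largest $k$ with $b^k\mid a$ ($+\infty$ for $a=0$), $\operatorname{ord}_0(a)=+\infty$ if $a=0$ and $0$ otherwise, and $\operatorname{ord}_1(a)=+\infty$. For nonempty $S\subseteq\mathbb{Z}$, a $b$-ordering of $S$ is a sequence $(a_i)_{i\ge0}$ in $S$ such that for each $i\ge1$, $a_i$ attains $\min_{a'\in S}\sum_{j=0}^{i-1}\operatorname{ord}_b(a'-a_j)$; the $b$-exponent sequence is $\alpha_k(S,b):=\sum_{j=0}^{k-1}\operatorname{ord}_b(a_k-a_j)$ for any $b$-ordering (independent of the choice). For $\mathcal{T}\subseteq\mathbb{N}$ the generalized factorial is $k!_{S,\mathcal{T}}:=\prod_{b\in\mathcal{T}}b^{\alpha_k(S,b)}$, with conventions $b^{+\infty}=0$ for $b=0$ and $b\ge2$, $1^{+\infty}=1$, and $b^0=1$ for all $b\in\mathbb{N}$. The generalized integer is $[n]_{S,\mathcal{T}}:=n!_{S,\mathcal{T}}/(n-1)!_{S,\mathcal{T}}$ for $1\le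 n<|S|$. *)

(* Defs.v *)
From mathcomp Require Import all_boot all_order all_algebra.
From Stdlib Require Import ClassicalEpsilon.

Set Implicit Arguments.
Unset Strict Implicit.
Unset Printing Implicit Defensive.

Import GRing.Theory Num.Theory.

Inductive enat := EFin of nat | EInf.

Definition eadd (x y : enat) : enat :=
  match x, y with EFin m, EFin n => EFin (m + n) | _, _ => EInf end.

Definition ele (x y : enat) : bool :=
  match x, y with
  | EFin m, EFin n => (m <= n)%N
  | _, EInf => true
  | EInf, EFin _ => false
  end.

(* ord_b(a) := sup { k in N : a Z ⊆ b^k Z }  (with 0^0 = 1).
   a Z ⊆ b^k Z  iff  b^k | a.  The set is downward closed and contains 0, so
   the sup is +oo if b^(k+1) | a for every k, and otherwise it is the least k
   with b^(k+1) ∤ a. *)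
Definition ord (b : nat) (a : int) : enat :=
  match excluded_middle_informative (exists k, ~~ (b ^ k.+1 %| `|a|)%N) with
  | left H => EFin (ex_minn H)
  | right _ => EInf
  end.

Definition esum (b : nat) (a : nat -> int) (i : nat) (x : int) : enat :=
  \big[eadd/EFin 0]_(j < i) ord b (x - a j)%R.

Definition is_b_ordering (S : int -> Prop) (b : nat) (a : nat -> int) : Prop :=
  (forall i, S (a i)) /\
  (forall i, (0 < i)%N -> forall a', S a' -> ele (esum b a i (a i)) (esum b a i a')).

(* alpha_k(S,b), computed from a (chosen) b-ordering of S
   (junk value EInf if S has no b-ordering). *)
Definition alpha (S : int -> Prop) (b k : nat) : enat :=
  match excluded_middle_informative (exists a, is_b_ordering S b a) with
  | left H => let a := proj1_sig (constructive_indefinite_description _ H) in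
              esum b a k (a k)
  | right _ => EInf
  end.

(* b^e with conventions b^(+oo) = 0 for b = 0 and b >= 2, 1^(+oo) = 1. *)
Definition epow (b : nat) (e : enat) : nat :=
  match e with
  | EFin k => b ^ k
  | EInf => if b == 1%N then 1%N else 0%N
  end.

(* Infinite product over b in N of f b, for f with f b = 1 for all large b
   (junk value 0 otherwise). *)
Definition iprod (f : nat -> nat) : nat :=
  match excluded_middle_informative (exists N, forall b, (N <= b)%N -> f b = 1%N) with
  | left H => \prod_(b < proj1_sig (constructive_indefinite_description _ H)) f b
  | right _ => 0%N
  end.

Definition gen_fact (S : int -> Prop) (T : pred nat) (k : nat) : nat :=
  iprod (fun b => if T b then epow b (alpha S b k) else 1%N).

Definition gen_int (S : int -> Prop) (T : pred nat) (n : nat) : rat :=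
  ((gen_fact S T n)%:R / (gen_fact S T n.-1)%:R)%R.

(* Main.v *)
Require Import Defs.
From mathcomp Require Import all_boot all_order all_algebra.
From HB Require Import structures.
From Stdlib Require Import ClassicalEpsilon.
From mathcomp Require Import zify ring.
Set Implicit Arguments.
Unset Strict Implicit.
Unset Printing Implicit Defensive.
Import GRing.Theory Num.Theory.



Lemma eaddA : associative eadd.
Proof. by case=> [x|] [y|] [z|] //=; rewrite addnA. Qed.
Lemma eaddC : commutative eadd.
Proof. by case=> [x|] [y|] //=; rewrite addnC. Qed.
Lemma eadd0 : left_id (EFin 0) eadd.
Proof. by case. Qed.
HB.instance Definition _ := Monoid.isComLaw.Build enat (EFin 0) eadd eaddA eaddC eadd0.

Lemma ord0E b : ord b 0 = EInf.
Proof.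
rewrite /ord; case: excluded_middle_informative => // H; exfalso.
by case: H => k; rewrite dvdn0.
Qed.

Lemma ord_spec b (y : int) : (1 < b)%N -> y != 0%R ->
  exists m, ord b y = EFin m /\ forall e, (b ^ e %| `|y|)%N = (e <= m)%N.
Proof.
move=> hb hy; rewrite /ord; case: excluded_middle_informative => [H|H]; last first.
  exfalso; apply: H; exists `|y|%N; apply/negP => /dvdn_leq.
  have: (0 < `|y|)%N by rewrite absz_gt0.
  move=> h /(_ h); rewrite leqNgt; move/negP; apply.
  by apply: (ltn_trans (ltn_expl _ hb)); rewrite ltn_exp2l.
case: ex_minnP => m Pm Hmin; exists m; split => // e.
case: (leqP e m) => hem.
  case: e hem => [|e] hem; first by rewrite dvd1n.
  have := Hmin e; case: (boolP (b ^ e.+1 %| `|y|)%N) => // /negP hn.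
  by move=> /(_ isT); rewrite leqNgt hem.
apply/negP => hd; move/negP: Pm; apply.
by apply: dvdn_trans hd; rewrite dvdn_exp2l.
Qed.

Definition tv b K (y : int) : nat := (\sum_(1 <= e < K) (b ^ e %| `|y|)%N)%N.

Lemma ord_tv b K (y : int) : (1 < b)%N -> y != 0%R -> (`|y| < K)%N ->
  ord b y = EFin (tv b K y).
Proof.
move=> hb hy hK; have [m [-> hm]] := ord_spec hb hy; congr EFin.
have hmy : (m < `|y|)%N.
  have := hm m; rewrite leqnn => /dvdn_leq; rewrite absz_gt0 => /(_ hy) h.
  exact: (leq_trans (ltn_expl _ hb)).
have hmK : (m.+1 <= K)%N by apply: leq_trans hmy (ltnW hK).
rewrite /tv (big_cat_nat _ (n := m.+1)) //=.
rewrite [X in (_ + X)%N]big1_seq; last first.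
  by move=> e /andP[_]; rewrite mem_index_iota => /andP[h _]; rewrite hm leqNgt h.
rewrite addn0 (eq_big_nat _ _ (F2 := fun _ => 1%N)); last first.
  by move=> e /andP[_ h]; rewrite hm -ltnS h.
by rewrite sum_nat_const_nat muln1 subn1.
Qed.

Lemma esum_inf b a i x : (exists j, (j < i)%N /\ x = a j) -> esum b a i x = EInf.
Proof.
elim: i => [|i IH] [j [hj hx]] //; rewrite /esum big_ord_recr /=.
have [hji|hji] := ltnP j i.
  have := IH (ex_intro _ j (conj hji hx)); rewrite /esum => ->; by [].
have ej : j = i by apply/eqP; rewrite eqn_leq hji -ltnS hj.
by rewrite hx ej subrr ord0E; case: (\big[_/_]_(_ < i) _).
Qed.

Lemma esum_fin b a i x K : (1 < b)%N ->
  (forall j, (j < i)%N -> x != a j) -> (forall j, (j < i)%N -> (`|x - a j| < K)%N) ->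
  esum b a i x = EFin (\sum_(j < i) tv b K (x - a j)).
Proof.
move=> hb; elim: i => [|i IH] hx hK; first by rewrite /esum !big_ord0.
rewrite /esum big_ord_recr /= -/(esum _ _ _ _) IH; last 2 first.
- by move=> j hj; apply: hx; apply: ltnW.
- by move=> j hj; apply: hK; apply: ltnW.
rewrite big_ord_recr /= (ord_tv (K := K) hb) //; first by rewrite subr_eq0 hx.
exact: hK.
Qed.



Definition cnt (M : nat) (a : nat -> int) (i : nat) (x : int) : nat :=
  (\sum_(j < i) ((M%:Z %| (x - a j)%R)%Z : nat))%N.

Lemma cnt0 M a x : cnt M a 0 x = 0%N.
Proof. by rewrite /cnt big_ord0. Qed.

Lemma cntS M a i x : cnt M a i.+1 x = (cnt M a i x + (M%:Z %| (x - a i)%R)%Z)%N.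
Proof. by rewrite /cnt big_ord_recr. Qed.

Lemma cnt1 a i x : cnt 1 a i x = i.
Proof.
rewrite /cnt (eq_bigr (fun _ => 1%N)); last by move=> j _; rewrite dvd1z.
by rewrite sum_nat_const card_ord muln1.
Qed.

Lemma cnt_cong M a i x y : (M%:Z %| (x - y)%R)%Z -> cnt M a i x = cnt M a i y.
Proof.
move=> h; apply: eq_bigr => j _.
have -> : (x - a j = (x - y) + (y - a j))%R by rewrite addrA subrK.
by rewrite rpredDl.
Qed.

Lemma cnt_mono M N a i x : (M %| N)%N -> (cnt N a i x <= cnt M a i x)%N.
Proof.
move=> h; apply: leq_sum => j _.
case: (boolP (N%:Z %| (x - a j)%R)%Z) => // hd.
by rewrite (dvdz_trans _ hd).
Qed.

Lemma dvd_res (M : nat) (r : nat) (z : int) : (r < M)%N ->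
  (M%:Z %| (r%:Z - z)%R)%Z = (r == `|(z %% M%:Z)%Z|%N).
Proof.
move=> hr; have hM : (M%:Z != 0)%R by rewrite eqz_nat; case: M hr.
rewrite -eqz_mod_dvd modz_small; last by rewrite lez_nat ltz_nat hr.
rewrite -[X in _ == X](@gez0_abs _ (modz_ge0 _ hM)).
by [].
Qed.

Lemma sum_res (M : nat) (z : int) : (0 < M)%N ->
  (\sum_(r < M) ((M%:Z %| ((nat_of_ord r)%:Z - z)%R)%Z : nat))%N = 1%N.
Proof.
move=> hM.
have hk : (`|(z %% M%:Z)%Z| < M)%N.
  have hM0 : (M%:Z != 0)%R by rewrite eqz_nat -lt0n.
  have := @ltz_pmod z (Posz M); rewrite ltz_nat => /(_ hM).
  by rewrite -{1}(gez0_abs (modz_ge0 z hM0)) ltz_nat.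
rewrite (eq_bigr (fun r : 'I_M => (r == Ordinal hk) : nat)); last first.
  by move=> r _; rewrite dvd_res.
rewrite (bigD1 (Ordinal hk)) //= eqxx big1 // => r /negPf ->; by [].
Qed.



Lemma cnt_total M a i : (0 < M)%N ->
  (\sum_(r < M) cnt M a i (nat_of_ord r)%:Z)%N = i.
Proof.
move=> hM; rewrite /cnt exchange_big /=.
rewrite (eq_bigr (fun _ => 1%N)); last by move=> j _; exact: sum_res.
by rewrite sum_nat_const card_ord muln1.
Qed.

Lemma dvdzPosz (m n : nat) : (m%:Z %| n%:Z)%Z = (m %| n)%N.
Proof. by rewrite dvdzE. Qed.

Lemma cnt_sub M b a i x : (0 < M)%N -> (0 < b)%N ->
  (\sum_(t < b) cnt (M * b) a i (x + ((nat_of_ord t * M)%N)%:Z)%R)%N = cnt M a i x.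
Proof.
move=> hM hb; rewrite /cnt exchange_big /=; apply: eq_bigr => j _.
have hM0 : (M%:Z != 0)%R by rewrite eqz_nat -lt0n.
case: (boolP (M%:Z %| (x - a j)%R)%Z) => hd /=.
  have [q hq] := dvdzP hd.
  rewrite -(sum_res (- q) hb); apply: eq_bigr => t _.
  have -> : ((x + ((t * M)%N)%:Z - a j) = ((t%:Z - - q) * M%:Z))%R.
    by rewrite opprK mulrDl -hq PoszM addrAC addrC.
  by rewrite PoszM (mulrC (Posz M)) dvdz_mul2r.
rewrite big1 // => t _; case: (boolP (_ %| _)%Z) => // h; exfalso; move/negP: hd; apply.
have -> : (x - a j = (x + ((t * M)%N)%:Z - a j) - (t%:Z * M%:Z))%R.
  by rewrite PoszM addrAC addrK.
apply: rpredB; last by apply: dvdz_mull.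
by apply: dvdz_trans h; rewrite PoszM dvdz_mulr.
Qed.

Definition Bal b a i := forall e x,
  (i %/ b ^ e <= cnt (b ^ e) a i x <= (i + b ^ e).-1 %/ b ^ e)%N.

Lemma bal_exist b a i : (1 < b)%N -> Bal b a i ->
  exists x, forall e, cnt (b ^ e) a i x = i %/ b ^ e.
Proof.
move=> hb hbal.
have hb0 : (0 < b)%N by apply: ltnW.
have P : forall E, exists x, forall e, (e <= E)%N -> cnt (b ^ e) a i x = i %/ b ^ e.
  elim => [|E [x hx]].
    by exists 0%R => e; rewrite leqn0 => /eqP ->; rewrite expn0 cnt1 divn1.
  have hbE : (0 < b ^ E)%N by rewrite expn_gt0 hb0.
  have hsum := cnt_sub a i x hbE hb0.
  case: (pickP (fun t : 'I_b => cnt (b ^ E * b) a i (x + ((nat_of_ord t * b ^ E)%N)%:Z)%R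
                     <= i %/ (b ^ E * b))%N) => [t ht | hn]; last first.
    exfalso.
    have : (\sum_(t < b) (i %/ (b ^ E * b)).+1 <=
            \sum_(t < b) cnt (b ^ E * b) a i (x + ((nat_of_ord t * b ^ E)%N)%:Z)%R)%N.
      by apply: leq_sum => t _; rewrite ltnNge hn.
    rewrite hsum hx // sum_nat_const card_ord divnMA.
    set n := (i %/ b ^ E)%N; move=> h.
    have : (n < b * (n %/ b).+1)%N by nia.
    by rewrite ltnNge h.
  exists (x + ((nat_of_ord t * b ^ E)%N)%:Z)%R => e he.
  case: (ltngtP e E.+1) he => // [heE _|-> _].
    rewrite -(hx e) //; apply: cnt_cong.
    rewrite addrAC subrr add0r dvdzPosz; apply: dvdn_mull; exact: dvdn_exp2l.
  apply/eqP; rewrite eqn_leq; have /andP[-> _] := hbal E.+1 (x + ((nat_of_ord t * b ^ E)%N)%:Z)%R.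
  by rewrite expnSr ht.
have [x hx] := P i; exists x => e.
case: (leqP e i) => hei; first by apply: hx.
have hie : (i < b ^ e)%N by apply: ltn_trans hei (ltn_expl _ hb).
rewrite divn_small //; apply/eqP; rewrite -leqn0.
apply: leq_trans (cnt_mono _ _ _ (dvdn_exp2l b (ltnW hei))) _.
by rewrite hx // divn_small // ltn_expl.
Qed.



Lemma res_lt (M : nat) (z : int) : (0 < M)%N -> (`|(z %% M%:Z)%Z| < M)%N.
Proof.
move=> hM; have hM0 : (M%:Z != 0)%R by rewrite eqz_nat -lt0n.
have := @ltz_pmod z (Posz M); rewrite ltz_nat => /(_ hM).
by rewrite -{1}(gez0_abs (modz_ge0 z hM0)) ltz_nat.
Qed.

Lemma res_dvd (M : nat) (z : int) : (0 < M)%N ->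
  (M%:Z %| ((`|(z %% M%:Z)%Z|%N)%:Z - z)%R)%Z.
Proof. by move=> hM; rewrite dvd_res ?res_lt. Qed.

Lemma bal_step b a i : (1 < b)%N -> Bal b a i ->
  (forall e, cnt (b ^ e) a i (a i) = i %/ b ^ e) -> Bal b a i.+1.
Proof.
move=> hb hbal hai e y.
have hM : (0 < b ^ e)%N by rewrite expn_gt0 ltnW.
set M := (b ^ e)%N in hM *.
have hMi : ((i + M) %/ M = i %/ M + 1)%N by rewrite divnDr // divnn hM.
have hup : ((i.+1 + M).-1 = i + M)%N by rewrite addSn.
rewrite cntS hup; have /andP[hl hu] := hbal e y; rewrite -/M in hl hu.
case: (boolP (M%:Z %| (y - a i)%R)%Z) => hd /=.
  rewrite (cnt_cong _ _ hd) hai hMi leqnn andbT divnS //.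
  by rewrite addnC leq_add2l leq_b1.
rewrite addn0; apply/andP; split; last first.
  apply: leq_trans hu _; rewrite leq_div2r //; exact: leq_pred.
rewrite divnS //; case: (boolP (M %| i.+1)%N) => hdi; last by rewrite add0n.
rewrite add1n ltnNge; apply/negP => hc.
have hc' : cnt M a i y = (i %/ M)%N by apply/eqP; rewrite eqn_leq hc hl.
set q := (i %/ M)%N in hc hl hc' hMi.
have hM1 : M != 1%N by apply: contraNneq hd => ->; rewrite dvd1z.
have [k hk] := dvdnP hdi.
have hq : (q.+1 = k)%N.
  by have := divnS i hM; rewrite hk mulnK // dvdn_mull // add1n => ->.
have hceil : ((i + M).-1 %/ M = q.+1)%N.
  have -> : ((i + M).-1 = k * M + (M - 2))%N by move: hM hM1 hk; lia.
  by rewrite divnMDl // divn_small ?addn0 //; move: hM; lia.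
set r1 := `|(a i %% M%:Z)%Z|%N; set r2 := `|(y %% M%:Z)%Z|%N.
have hr1 : (r1 < M)%N by apply: res_lt.
have hr2 : (r2 < M)%N by apply: res_lt.
have h1 : cnt M a i r1%:Z = q by rewrite (@cnt_cong _ _ _ _ (a i)) ?hai // res_dvd.
have h2 : cnt M a i r2%:Z = cnt M a i y by rewrite (@cnt_cong _ _ _ _ y) // res_dvd.
have hr12 : r1 != r2.
  apply/negP => /eqP e12; move/negP: hd; apply.
  have -> : (y - a i = (r1%:Z - a i) - (r2%:Z - y))%R by rewrite e12; ring.
  by apply: rpredB; apply: res_dvd.
have : (\sum_(r < M) (cnt M a i (nat_of_ord r)%:Z + (nat_of_ord r == r1) + (nat_of_ord r == r2))
          <= \sum_(r < M) q.+1)%N.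
  apply: leq_sum => r _.
  case: (eqVneq (nat_of_ord r) r1) => [->|hn1].
    by rewrite h1 (negPf hr12) /= addn0 addn1.
  case: (eqVneq (nat_of_ord r) r2) => [->|hn2].
    by rewrite h2 hc' /= addn0 addn1.
  rewrite !addn0; have /andP[_ ] := hbal e (Posz (nat_of_ord r)).
  by rewrite -/M hceil.
rewrite !big_split /= cnt_total // sum_nat_const card_ord.
have s1 : forall r0, (r0 < M)%N -> (\sum_(r < M) (nat_of_ord r == r0) = 1)%N.
  move=> r0 hr0; rewrite (bigD1 (Ordinal hr0)) //= eqxx big1 // => r hr.
  by rewrite -val_eqE /= in hr; rewrite (negPf hr).
rewrite (s1 _ hr1) (s1 _ hr2).
rewrite hq mulnC -hk; lia.
Qed.



Lemma bound (f : nat -> nat) i : exists K, forall j, (j < i)%N -> (f j < K)%N.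
Proof.
elim: i => [|i [K hK]]; first by exists 0%N.
exists (maxn K (f i).+1) => j; rewrite ltnS leq_eqVlt => /orP[/eqP ->|hj].
  by rewrite leq_max leqnn orbT.
by rewrite leq_max hK.
Qed.

Lemma sum_pointwise m n (f g : nat -> nat) :
  (forall e, (m <= e < n)%N -> (g e <= f e)%N) ->
  (\sum_(m <= e < n) f e <= \sum_(m <= e < n) g e)%N ->
  forall e, (m <= e < n)%N -> f e = g e.
Proof.
move=> hle hs e he.
have h0 : (\sum_(e0 <- index_iota m n | e0 \in index_iota m n) (f e0 - g e0) == 0)%N.
  rewrite sumnB; last by move=> x; rewrite mem_index_iota; apply: hle.
  by rewrite -!big_seq subn_eq0.
move: h0; rewrite sum_nat_seq_eq0 => /allP /(_ e); rewrite mem_index_iota he.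
move=> /(_ isT) /=; rewrite subn_eq0 => h; apply/eqP; rewrite eqn_leq h hle //.
Qed.

Lemma xfresh b a i x : (1 < b)%N -> (forall e, cnt (b ^ e) a i x = i %/ b ^ e) ->
  forall j, (j < i)%N -> x != a j.
Proof.
move=> hb h j hj; apply/eqP => ex.
have := h i; rewrite (divn_small (ltn_expl _ hb)) /cnt (bigD1 (Ordinal hj)) //=.
rewrite ex subrr dvdz0 add1n; by move=> /eqP.
Qed.

Lemma esum_cnt b (a : nat -> int) i (x : int) K : (1 < b)%N ->
  (forall j, (j < i)%N -> x != a j) -> (forall j, (j < i)%N -> (`|(x - a j)%R| < K)%N) ->
  esum b a i x = EFin (\sum_(1 <= e < K) cnt (b ^ e) a i x)%N.
Proof.
move=> hb hf hK; rewrite (esum_fin hb hf hK); congr EFin.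
rewrite /tv /cnt exchange_big /=; apply: eq_bigr => e _; apply: eq_bigr => j _.
by rewrite dvdzE absz_nat.
Qed.

Lemma exact_of_bal b a i : (1 < b)%N -> is_b_ordering (fun _ => True) b a ->
  Bal b a i -> forall e, cnt (b ^ e) a i (a i) = i %/ b ^ e.
Proof.
move=> hb [_ hord] hbal.
case: (posnP i) => [->|hi] e; first by rewrite cnt0 div0n.
have [x0 hx0] := bal_exist hb hbal.
have fx0 := xfresh hb hx0.
have [K1 hK1] := bound (fun j => `|x0 - a j|%N) i.
have hle := hord i hi x0 I.
have fai : forall j, (j < i)%N -> a i != a j.
  move=> j hj; apply/eqP => eq; move: hle.
  rewrite (esum_inf _ (ex_intro _ j (conj hj eq))) (esum_fin (K := K1) hb fx0 hK1).
  by [].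
have [K2 hK2] := bound (fun j => `|a i - a j|%N) i.
set K := maxn (maxn K1 K2) i.+1.
have hK1' : forall j, (j < i)%N -> (`|x0 - a j| < K)%N.
  by move=> j hj; apply: leq_trans (hK1 j hj) _; rewrite /K !leq_max leqnn.
have hK2' : forall j, (j < i)%N -> (`|a i - a j| < K)%N.
  by move=> j hj; apply: leq_trans (hK2 j hj) _; rewrite /K !leq_max leqnn !orbT.
have hiK : (i < K)%N by rewrite /K leq_max leqnn orbT.
move: hle; rewrite (esum_cnt hb fx0 hK1') (esum_cnt hb fai hK2') /= => hle.
have hpt := @sum_pointwise 1 K (fun e => cnt (b ^ e) a i (a i)) (fun e => cnt (b ^ e) a i x0).
case: e => [|e]; first by rewrite expn0 cnt1 divn1.
case: (ltnP e.+1 K) => heK.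
  rewrite -(hx0 e.+1); apply: hpt => //.
  - move=> e0 _; rewrite hx0; have /andP[] := hbal e0 (a i); by [].
have hie : (i < b ^ e.+1)%N.
  by apply: (leq_trans hiK); apply: leq_trans heK (ltnW (ltn_expl _ hb)).
rewrite (divn_small hie).
rewrite /cnt big1 // => j _; case: (boolP (_ %| _)%Z) => // hd; exfalso.
move: hd; rewrite dvdzE absz_nat => /dvdn_leq; rewrite absz_gt0 subr_eq0 fai // => /(_ isT) h.
have := hK2' j (ltn_ord j); rewrite ltnNge; move/negP; apply.
apply: leq_trans h; apply: leq_trans heK (ltnW (ltn_expl _ hb)).
Qed.

Lemma ordering_props b a : (1 < b)%N -> is_b_ordering (fun _ => True) b a ->
  forall i, Bal b a i /\ (forall e, cnt (b ^ e) a i (a i) = i %/ b ^ e).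
Proof.
move=> hb ho; elim => [|i [hbal hex]].
  have hbal : Bal b a 0 by move=> e x; rewrite cnt0 div0n.
  by split=> // e; exact: exact_of_bal.
have hbal' := bal_step hb hbal hex.
by split=> //; exact: exact_of_bal.
Qed.



Lemma cnt_id_self M i : (0 < M)%N -> cnt M (fun j => Posz j) i (Posz i) = (i %/ M)%N.
Proof.
move=> hM; elim: i => [|i IH]; first by rewrite cnt0 div0n.
rewrite /cnt big_ord_recl /=.
have -> : (\sum_(j < i) ((M%:Z %| (Posz i.+1 - Posz (lift ord0 j))%R)%Z : nat))%N
          = cnt M (fun j => Posz j) i (Posz i).
  apply: eq_bigr => j _; rewrite lift0.
  have -> : (Posz i.+1 - Posz j.+1 = Posz i - Posz j)%R.
    by rewrite -addn1 -(addn1 j) !PoszD opprD addrACA subrr addr0.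
  by [].
rewrite IH (divnS _ hM) subr0 dvdzE !absz_nat.
by [].
Qed.

Lemma cnt_id_block M i x : (0 < M)%N ->
  cnt M (fun j => Posz j) (i + M) x = (cnt M (fun j => Posz j) i x + 1)%N.
Proof.
move=> hM; rewrite /cnt big_split_ord /=; congr (_ + _)%N.
rewrite -(sum_res (x - Posz i)%R hM); apply: eq_bigr => t _.
have -> : (x - Posz (i + t) = - (Posz t - (x - Posz i)))%R by rewrite PoszD; ring.
by rewrite rpredN.
Qed.

Lemma cnt_id_lower M i x : (0 < M)%N -> (i %/ M <= cnt M (fun j => Posz j) i x)%N.
Proof.
move=> hM; elim/ltn_ind: i => i IH.
case: (ltnP i M) => hiM; first by rewrite divn_small.
rewrite -(subnK hiM) cnt_id_block // divnDr // divnn hM leq_add2r.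
apply: IH; move: hM hiM; lia.
Qed.

Lemma id_ordering b : (1 < b)%N -> is_b_ordering (fun _ => True) b (fun j => Posz j).
Proof.
move=> hb; split=> // i hi a' _.
case: (pickP (fun j : 'I_i => a' == Posz j)) => [j /eqP hj | hn].
  rewrite (esum_inf _ (ex_intro _ (nat_of_ord j) (conj (ltn_ord j) hj))).
  by case: (esum _ _ _ _).
have f1 : forall j, (j < i)%N -> a' != Posz j.
  by move=> j hj; have := hn (Ordinal hj); rewrite /= => ->.
have f2 : forall j, (j < i)%N -> Posz i != Posz j.
  by move=> j hj; rewrite eqz_nat; apply/negP => /eqP h; rewrite h ltnn in hj.
have [K1 hK1] := bound (fun j => `|(a' - Posz j)%R|%N) i.
have [K2 hK2] := bound (fun j => `|(Posz i - Posz j)%R|%N) i.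
set K := maxn K1 K2.
rewrite (@esum_cnt _ (fun j => Posz j) _ _ K hb f1); last first.
  by move=> j hj; apply: leq_trans (hK1 j hj) _; rewrite leq_max leqnn.
rewrite (@esum_cnt _ (fun j => Posz j) _ _ K hb f2); last first.
  by move=> j hj; apply: leq_trans (hK2 j hj) _; rewrite leq_max leqnn orbT.
rewrite /=; apply: leq_sum => e _.
rewrite cnt_id_self ?expn_gt0 ?(ltnW hb) //; apply: cnt_id_lower.
by rewrite expn_gt0 ltnW.
Qed.

Lemma alpha_b b k N : (1 < b)%N -> (k < N)%N ->
  alpha (fun _ => True) b k = EFin (\sum_(1 <= e < N) k %/ b ^ e)%N.
Proof.
move=> hb hkN; rewrite /alpha; case: excluded_middle_informative => [H|H]; last first.
  by exfalso; apply: H; exists (fun j => Posz j); exact: id_ordering.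
case: (constructive_indefinite_description _ H) => a Ha /=.
have [_ hex] := ordering_props hb Ha k.
have fk := xfresh hb hex.
have [K hK] := bound (fun j => `|(a k - a j)%R|%N) k.
set K' := maxn K N.
rewrite (@esum_cnt _ _ _ _ K' hb fk); last first.
  by move=> j hj; apply: leq_trans (hK j hj) _; rewrite leq_max leqnn.
congr EFin.
rewrite (eq_big_nat _ _ (F2 := fun e => (k %/ b ^ e)%N)); last by move=> e _; apply: hex.
have h1N : (1 <= N)%N by apply: leq_ltn_trans hkN.
rewrite (big_cat_nat _ (n := N)) //=; last by rewrite leq_maxr.
rewrite [X in (_ + X)%N]big1_seq ?addn0 //.
move=> e /andP[_]; rewrite mem_index_iota => /andP[he _].
apply: divn_small; apply: leq_trans hkN _; apply: leq_trans he _.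
exact: ltnW (ltn_expl _ hb).
Qed.



Lemma ord0_nz (y : int) : y != 0%R -> ord 0 y = EFin 0.
Proof.
move=> hy; have P0 : ~~ (0 ^ 1 %| `|y|)%N by rewrite expn1 dvd0n absz_eq0.
rewrite /ord; case: excluded_middle_informative => [H|H]; last first.
  by exfalso; apply: H; exists 0%N.
congr EFin; case: ex_minnP => m Pm Hmin; apply/eqP; rewrite -leqn0; exact: Hmin.
Qed.

Lemma esum0_fresh a i x : (forall j, (j < i)%N -> x != a j) -> esum 0 a i x = EFin 0.
Proof.
elim: i => [|i IH] hf; first by rewrite /esum big_ord0.
rewrite /esum big_ord_recr /= -/(esum _ _ _ _) IH; last by move=> j hj; apply: hf; apply: ltnW.
by rewrite ord0_nz // subr_eq0 hf.
Qed.

Lemma ele_0 y : ele y (EFin 0) -> y = EFin 0.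
Proof. by case: y => [m|] //=; rewrite leqn0 => /eqP ->. Qed.

Lemma alpha0 k : alpha (fun _ => True) 0 k = EFin 0.
Proof.
rewrite /alpha; case: excluded_middle_informative => [H|H]; last first.
  exfalso; apply: H; exists (fun j => Posz j); split=> // i hi a' _.
  rewrite esum0_fresh; first by case: (esum _ _ _ _).
  by move=> j hj; rewrite eqz_nat; apply/negP => /eqP h; rewrite h ltnn in hj.
case: (constructive_indefinite_description _ H) => a [_ Ha] /=.
case: k => [|k]; first by rewrite /esum big_ord0.
have [K hK] := bound (fun j => `|a j|%N) k.+1.
apply: ele_0; have := Ha k.+1 isT (Posz K) I; rewrite (@esum0_fresh _ _ (Posz K)) //.
move=> j hj; apply/negP => /eqP e; have := hK j hj; rewrite -e absz_nat ltnn.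
by [].
Qed.

Lemma epow1 x : epow 1 x = 1%N.
Proof. by case: x => [m|] //=; rewrite exp1n. Qed.

Lemma prod_ext (f : nat -> nat) N N' : (N <= N')%N -> (forall b, (N <= b)%N -> f b = 1%N) ->
  (\prod_(b < N') f b = \prod_(b < N) f b)%N.
Proof.
move=> hN hf; rewrite -!(big_mkord xpredT) (big_cat_nat _ (n := N)) //=.
rewrite [X in (_ * X)%N]big1_seq ?muln1 //.
by move=> b /andP[_]; rewrite mem_index_iota => /andP[h _]; apply: hf.
Qed.

Lemma iprod_eq (f : nat -> nat) N : (forall b, (N <= b)%N -> f b = 1%N) ->
  iprod f = (\prod_(b < N) f b)%N.
Proof.
move=> hf; rewrite /iprod; case: excluded_middle_informative => [H|H]; last first.
  by exfalso; apply: H; exists N.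
case: (constructive_indefinite_description _ H) => N0 hN0 /=.
case: (leqP N0 N) => h; first by symmetry; apply: prod_ext.
by apply: prod_ext => //; apply: ltnW.
Qed.

Definition g k b := epow b (alpha (fun _ => True) b k).

Lemma g_tail n k b : (0 < n)%N -> (k <= n)%N -> (n.+1 <= b)%N -> g k b = 1%N.
Proof.
move=> hn hk hb; have hb1 : (1 < b)%N by apply: leq_trans hb; rewrite ltnS.
rewrite /g (@alpha_b _ _ k.+1) //= big1_seq ?expn0 //.
move=> e /andP[_]; rewrite mem_index_iota => /andP[he _].
apply: divn_small; apply: (@leq_trans b); first exact: leq_ltn_trans hk hb.
rewrite -{1}(expn1 b) leq_pexp2l //; exact: ltnW.
Qed.

Lemma g_pos k b : (0 < g k b)%N.
Proof.
rewrite /g; case: b => [|[|b]]; first by rewrite alpha0.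
  by rewrite epow1.
by rewrite (@alpha_b _ _ k.+1) //= expn_gt0.
Qed.

Definition h n b := if (1 < b)%N then epow b (ord b (Posz n)) else 1%N.

Lemma g_step n b : (0 < n)%N -> g n b = (g n.-1 b * h n b)%N.
Proof.
move=> hn; rewrite /g /h; case: b => [|[|b]].
- by rewrite !alpha0.
- by rewrite !epow1.
have hb2 : (1 < b.+2)%N by [].
have hn1 : (n.-1 < n.+1)%N by apply: leq_ltn_trans (leq_pred n) _.
rewrite /= (@alpha_b b.+2 n n.+1 hb2 (ltnSn n)) (@alpha_b b.+2 n.-1 n.+1 hb2 hn1).
rewrite (@ord_tv _ n.+1) //=; last by rewrite eqz_nat -lt0n.
rewrite -expnD; congr (_ ^ _)%N; rewrite /tv -big_split /=; apply: eq_bigr => e _.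
rewrite ?absz_nat -{1}(prednK hn) divnS ?expn_gt0 // prednK // addnC.
reflexivity.
Qed.

Theorem theorem7p3 (n : nat) (hn : (0 < n)%N) :
  gen_int (fun _ : int => True) (fun _ : nat => true) n =
  (((\prod_(2 <= b < n.+1) epow b (ord b (Posz n)))%N)%:R)%R.
Proof.
rewrite /gen_int /gen_fact.
rewrite (@iprod_eq _ n.+1); last by move=> b hb; apply: (g_tail hn (leqnn n) hb).
rewrite (@iprod_eq _ n.+1); last by move=> b hb; apply: (g_tail hn (leq_pred n) hb).
rewrite (eq_bigr (fun b : 'I_n.+1 => g n.-1 b * h n b)%N); last by move=> b _; apply: g_step.
rewrite big_split /=.
have hA : (\prod_(b < n.+1) epow b (alpha (fun=> True) b n.-1) = \prod_(b < n.+1) g n.-1 b)%N.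
  by apply: eq_bigr.
have hA0 : ((\prod_(b < n.+1) g n.-1 b)%:R != 0 :> rat)%R.
  by rewrite pnatr_eq0 -lt0n prodn_gt0 // => b; apply: g_pos.
rewrite hA natrM mulrAC (divff hA0) mul1r.
congr (_ %:R)%R.
rewrite -(big_mkord xpredT) big_ltn; last by [].
rewrite big_ltn; last exact: hn.
rewrite /h /= mul1n mul1n.
apply: eq_big_nat => b /andP[hb _]; rewrite hb.
reflexivity.
Qed.
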